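(* Let $p_0^{(k)},\dots,p_n^{(k)}\in\mathcal{P}$ be the preference densities of the $n+1$ agents at iteration $k$. Construct the densities at iteration $k+1$ sequentially for $i=0,1,\dots,n$, in that order, by $$p_i^{(k+1)}(f) = \frac{p_i^{(k)}(f)\exp\big(-\bar{\gamma}_i^{(k)}(f)\big)}{\int_{\mathcal{F}} p_i^{(k)}(g)\exp\big(-\bar{\gamma}_i^{(k)}(g)\big)\, dg},$$ where $$\bar{\gamma}_i^{(k)}(f) = \sum_{j=0}^{i-1} \int_{\mathcal{F}} \psi(f, g)\, p_j^{(k+1)}(g)\, dg + \sum_{j=i+1}^{n} \int_{\mathcal{F}} \psi(f, g)\, p_j^{(k)}(g)\, dg .$$ If $p_i^{(k+1)} \neq p_i^{(k)}$ for some $i\in\{0,\dots,n\}$, then there exists $\xi>0$ such that $$J_c\big(p_0^{(k+1)},\dots,p_n^{(k+1)}\big) \le J_c\big(p_0^{(k)},\dots,p_n^{(k)}\big) - \xi .$$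
   Context: Trajectory space: $\mathcal{F} \subseteq \mathbb{R}^{d\times T}$, where $d$ is the state dimension and $T$ is the number of time points. Distribution space: $\mathcal{P}$ is the set of probability density functions $p:\mathcal{F}\to[0,\infty)$ with $\int_{\mathcal{F}} p(f)\,df=1$. There are $n+1$ agents, indexed $0,1,\dots,n$ (index $0$ is the robot). The collision penalty function $\psi:\mathcal{F}\times\mathcal{F}\to[0,\infty)$ is symmetric, i.e. $\psi(f,g)=\psi(g,f)$. The expected collision penalty of two densities is $$c(p,q)=\int_{\mathcal{F}}\int_{\mathcal{F}}\psi(f,g)\,p(f)\,q(g)\,df\,dg,$$ and the joint expected collision penalty is $$J_c(p_0,\dots,p_n)=\sum_{i=0}^{n}\sum_{j=i+1}^{n} c(p_i,p_j).$$ *)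

(* Defs.v *)
From HB Require Import structures.
From mathcomp Require Import all_boot all_order all_algebra.
From mathcomp Require Import all_classical all_reals all_analysis.
Set Implicit Arguments. Unset Strict Implicit. Unset Printing Implicit Defensive.
Import Order.TTheory GRing.Theory Num.Theory.
Local Open Scope classical_set_scope.
Local Open Scope ring_scope.
Local Open Scope ereal_scope.

Section Defs.
Context {dT : measure_display} {T : measurableType dT} {R : realType}.
Variable mu : {measure set T -> \bar R}.
Variable F : set T.
Variable psi : T -> T -> R.

Definition is_density (p : T -> R) : Prop :=
  [/\ measurable_fun F p, (forall f, F f -> (0 <= p f)%R)
    & \int[mu]_(f in F) (p f)%:E = 1].

Definition coll (p q : T -> R) : \bar R :=
  \int[mu]_(f in F) \int[mu]_(g in F) (psi f g * p f * q g)%:E.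

Definition Jc (n : nat) (p : 'I_n.+1 -> T -> R) : \bar R :=
  \sum_(i < n.+1) \sum_(j < n.+1 | (i < j)%N) coll (p i) (p j).

Definition gammabar (n : nat) (pk pk1 : 'I_n.+1 -> T -> R) (i : 'I_n.+1)
    (f : T) : \bar R :=
  \sum_(j < n.+1 | (j < i)%N) \int[mu]_(g in F) (psi f g * pk1 j g)%:E
  + \sum_(j < n.+1 | (i < j)%N) \int[mu]_(g in F) (psi f g * pk j g)%:E.

Definition update_rule (n : nat) (pk pk1 : 'I_n.+1 -> T -> R) : Prop :=
  forall (i : 'I_n.+1) (f : T), F f ->
    pk1 i f = (pk i f * expR (- fine (gammabar pk pk1 i f))
       / fine (\int[mu]_(g in F) (pk i g * expR (- fine (gammabar pk pk1 i g)))%:E))%R.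

End Defs.

(* Main.v *)
Require Import Defs.
From HB Require Import structures.
From mathcomp Require Import all_boot all_order all_algebra.
From mathcomp Require Import all_classical all_reals all_analysis.
From mathcomp Require Import measurable_realfun lebesgue_integral_fubini.
From mathcomp Require Import ring lra.
Import Order.TTheory GRing.Theory Num.Theory.
Local Open Scope classical_set_scope.
Local Open Scope ring_scope.

Section Aux.
Context (dT : measure_display) (T : measurableType dT) (R : realType).
Variable mu : {sigma_finite_measure set T -> \bar R}.
Variable F : set T.
Hypothesis mF : measurable F.

Lemma swap_int (h : T -> T -> \bar R) :
  measurable_fun (F `*` F) (fun z => h z.1 z.2) ->
  (forall x y, F x -> F y -> (0 <= h x y)%E) ->
  (\int[mu]_(x in F) \int[mu]_(y in F) h x y =
   \int[mu]_(y in F) \int[mu]_(x in F) h x y)%E.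
Proof.
move=> mh h0.
pose H := (fun z : T * T => h z.1 z.2) \_ (F `*` F).
have mFF : measurable (F `*` F) by exact: measurableX.
have mH : measurable_fun setT H by exact/(measurable_restrictT _ _).1.
have H0 z : (0 <= H z)%E.
  rewrite /H patchE; case: ifPn => // /set_mem [/= ? ?]; exact: h0.
have := fubini_tonelli H mH H0 => /= E.
have L : (\int[mu]_(x in F) \int[mu]_(y in F) h x y = \int[mu]_x \int[mu]_y H (x, y))%E.
  rewrite integral_mkcond; apply: eq_integral => x _.
  rewrite patchE; case: ifPn => xF.
    rewrite integral_mkcond; apply: eq_integral => y _.
    by rewrite /H !patchE in_setX /= xF.
  apply/esym/integral0_eq => y _; rewrite /H patchE in_setX /= (negbTE xF).
  done.
have L2 : (\int[mu]_(y in F) \int[mu]_(x in F) h x y = \int[mu]_y \int[mu]_x H (x, y))%E.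
  rewrite integral_mkcond; apply: eq_integral => y _.
  rewrite patchE; case: ifPn => yF.
    rewrite integral_mkcond; apply: eq_integral => x _.
    by rewrite /H !patchE in_setX /= yF andbT.
  apply/esym/integral0_eq => x _; rewrite /H patchE in_setX /= (negbTE yF) andbF.
  done.
by rewrite L L2.
Qed.

Lemma meas_param (h : T -> T -> \bar R) :
  measurable_fun (F `*` F) (fun z => h z.1 z.2) ->
  (forall x y, F x -> F y -> (0 <= h x y)%E) ->
  measurable_fun F (fun x => \int[mu]_(y in F) h x y)%E.
Proof.
move=> mh h0.
pose H := (fun z : T * T => h z.1 z.2) \_ (F `*` F).
have mFF : measurable (F `*` F) by exact: measurableX.
have mH : measurable_fun setT H by exact/(measurable_restrictT _ _).1.
have H0 z : (0 <= H z)%E.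
  rewrite /H patchE; case: ifPn => // /set_mem [/= ? ?]; exact: h0.
have mFH := @measurable_fun_fubini_tonelli_F _ _ _ _ _ mu H mH H0.
have mFH' := measurable_funS measurableT (@subsetT _ F) mFH.
eapply eq_measurable_fun; last exact: mFH'.
move=> x /set_mem xF.
rewrite /fubini_F [RHS]integral_mkcond; apply: eq_integral => y _.
by rewrite /H !patchE in_setX /= (mem_set xF).
Qed.

End Aux.

Section Coll.
Context (dT : measure_display) (T : measurableType dT) (R : realType).
Variable mu : {sigma_finite_measure set T -> \bar R}.
Variable F : set T.
Variable psi : T -> T -> R.
Hypothesis mF : measurable F.
Hypothesis mpsi : measurable_fun (F `*` F) (fun x : T * T => psi x.1 x.2).
Hypothesis psi0 : forall f g, F f -> F g -> 0 <= psi f g.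
Hypothesis psisym : forall f g, F f -> F g -> psi f g = psi g f.

Definition G (y : T -> R) (f : T) : \bar R :=
  (\int[mu]_(g in F) (psi f g * y g)%:E)%E.

Definition nnm (y : T -> R) := measurable_fun F y /\ forall g, F g -> 0 <= y g.

Lemma mfst (x : T -> R) : measurable_fun F x ->
  measurable_fun (F `*` F) (fun z : T * T => x z.1).
Proof.
move=> mx; apply: (@measurable_comp _ _ _ _ _ _ F x (F `*` F) fst) => //.
  by move=> _ [z [Fz1 _] <-].
exact: measurable_funTS measurable_fst.
Qed.

Lemma msnd (x : T -> R) : measurable_fun F x ->
  measurable_fun (F `*` F) (fun z : T * T => x z.2).
Proof.
move=> mx; apply: (@measurable_comp _ _ _ _ _ _ F x (F `*` F) snd) => //.
  by move=> _ [z [_ Fz2] <-].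
exact: measurable_funTS measurable_snd.
Qed.

Lemma mprod3 (x y : T -> R) : measurable_fun F x -> measurable_fun F y ->
  measurable_fun (F `*` F) (fun z : T * T => (psi z.1 z.2 * x z.1 * y z.2)%:E).
Proof.
move=> mx my; apply/measurable_EFinP.
apply: measurable_funM; last exact: msnd.
apply: measurable_funM => //; exact: mfst.
Qed.

Lemma mprod2 (y : T -> R) : measurable_fun F y ->
  measurable_fun (F `*` F) (fun z : T * T => (psi z.1 z.2 * y z.2)%:E).
Proof.
move=> my; apply/measurable_EFinP.
apply: measurable_funM => //; exact: msnd.
Qed.

Lemma msec (y : T -> R) f : F f -> measurable_fun F y ->
  measurable_fun F (fun g => (psi f g * y g)%:E).
Proof.
move=> Ff my.
have m2 := mprod2 y my.
apply: (@measurable_comp _ _ _ _ _ _ (F `*` F) (fun z : T * T => (psi z.1 z.2 * y z.2)%:E) F (pair f)) => //.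
- exact: measurableX.
- by move=> _ [g Fg <-].
- apply: measurable_funTS; exact: pair1_measurable.
Qed.

Lemma mG y : nnm y -> measurable_fun F (G y).
Proof.
move=> [my y0]; apply: (@meas_param _ _ _ mu F mF (fun f g => (psi f g * y g)%:E)).
  exact: mprod2.
by move=> f g Ff Fg; rewrite lee_fin mulr_ge0 ?psi0 ?y0.
Qed.

Lemma G0 y f : nnm y -> F f -> (0 <= G y f)%E.
Proof.
move=> [_ y0] Ff; apply: integral_ge0 => g Fg.
by rewrite lee_fin mulr_ge0 ?psi0 ?y0.
Qed.

Lemma collE x y : nnm x -> nnm y ->
  coll mu F psi x y = (\int[mu]_(f in F) ((x f)%:E * G y f))%E.
Proof.
move=> [mx x0] [my y0]; apply: eq_integral => f /set_mem Ff.
rewrite /G -ge0_integralZl_EFin //; last by rewrite x0.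
- by apply: eq_integral => g _; rewrite -EFinM -mulrA mulrCA.
- by move=> g Fg; rewrite lee_fin mulr_ge0 ?psi0 ?y0.
- exact: msec.
Qed.

Lemma coll_sym x y : nnm x -> nnm y ->
  coll mu F psi x y = coll mu F psi y x.
Proof.
move=> [mx x0] [my y0]; rewrite /coll.
rewrite (@swap_int _ _ _ mu F mF (fun f g => (psi f g * x f * y g)%:E)).
- apply: eq_integral => f /set_mem Ff; apply: eq_integral => g /set_mem Fg.
  by rewrite psisym // mulrAC.
- exact: mprod3.
- by move=> f g Ff Fg; rewrite lee_fin !mulr_ge0 ?psi0 ?x0 ?y0.
Qed.

Lemma coll0 x y : nnm x -> nnm y -> (0 <= coll mu F psi x y)%E.
Proof.
move=> [mx x0] [my y0]; apply: integral_ge0 => f Ff; apply: integral_ge0 => g Fg.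
by rewrite lee_fin !mulr_ge0 ?psi0 ?x0 ?y0.
Qed.

Lemma int_sum_coll (n : nat) (P : 'I_n.+1 -> T -> R) (i : 'I_n.+1) x :
  nnm x -> (forall j, nnm (P j)) ->
  (\int[mu]_(f in F) ((x f)%:E * \sum_(j < n.+1 | j != i) G (P j) f))%E =
  (\sum_(j < n.+1 | j != i) coll mu F psi x (P j))%E.
Proof.
move=> [mx x0] hP.
transitivity (\int[mu]_(f in F) (\sum_(j <- [seq j <- index_enum 'I_n.+1 | j != i])
    ((x f)%:E * G (P j) f)))%E.
  apply: eq_integral => f /set_mem Ff; rewrite big_filter ge0_sume_distrr //.
  by move=> j _; apply: G0.
rewrite ge0_integral_sum //.
- rewrite big_filter; apply: eq_bigr => j _; rewrite collE //.
- move=> j; apply: emeasurable_funM; last exact: mG.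
  exact/measurable_EFinP.
- by move=> j f Ff; rewrite mule_ge0 ?lee_fin ?x0 ?G0.
Qed.

End Coll.

Section Core.
Context (dT : measure_display) (T : measurableType dT) (R : realType).
Variable mu : {measure set T -> \bar R}.
Variable F : set T.
Hypothesis mF : measurable F.
Variables p gam q : T -> R.
Hypothesis mp : measurable_fun F p.
Hypothesis p0 : forall f, F f -> 0 <= p f.
Hypothesis ip : (\int[mu]_(f in F) (p f)%:E = 1)%E.
Hypothesis mgam : measurable_fun F gam.
Hypothesis gam0 : forall f, F f -> 0 <= gam f.

Let Zi := (\int[mu]_(g in F) (p g * expR (- gam g))%:E)%E.
Hypothesis hq : forall f, F f -> q f = p f * expR (- gam f) / fine Zi.

Let mpe : measurable_fun F (fun g => p g * expR (- gam g)).
Proof.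
have me : measurable_fun F (fun x => expR (- gam x)).
  by apply: measurableT_comp; [exact: measurable_expR|exact: measurable_funN].
exact: measurable_funM mp me.
Qed.

Let pe0 f : F f -> 0 <= p f * expR (- gam f).
Proof. by move=> Ff; rewrite mulr_ge0 ?p0 ?expR_ge0. Qed.

Let Zi_ge0 : (0 <= Zi)%E.
Proof. by apply: integral_ge0 => f Ff; rewrite lee_fin pe0. Qed.

Let Zi_le1 : (Zi <= 1)%E.
Proof.
rewrite -ip; apply: ge0_le_integral => //.
- exact/measurable_EFinP.
- exact/measurable_EFinP.
move=> f Ff; rewrite lee_fin -[leRHS]mulr1 ler_wpM2l ?p0 //.
by rewrite expR_le1 oppr_le0 gam0.
Qed.

Let Zi_neq0 : Zi != 0%E.
Proof.
apply/negP => /eqP Z0.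
have : ae_eq mu F (fun g => (p g * expR (- gam g))%:E) (cst 0%E).
  apply/ae_eq_integral_abs => //; first exact/measurable_EFinP.
  rewrite -Z0; apply: eq_integral => f /set_mem Ff.
  by rewrite gee0_abs // lee_fin pe0.
move=> hae.
have : ae_eq mu F (fun g => (p g)%:E) (cst 0%E).
  apply: filterS hae => f h Ff; have := h Ff => /= /eqP.
  rewrite eqe mulf_eq0 => /orP[/eqP -> //|].
  by rewrite gt_eqF // expR_gt0.
move=> hae2.
have mp' : measurable_fun F (fun g => (p g)%:E) by exact/measurable_EFinP.
have := ae_eq_integral (cst 0%E) (fun g => (p g)%:E) mF mp' (measurable_cst _) hae2.
rewrite ip integral0 => /eqP; rewrite onee_eq0 //.
Qed.

Let Z := fine Zi.
Let ZiE : Zi = Z%:E.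
Proof.
have h : (Zi < +oo)%E by apply: (le_lt_trans Zi_le1); exact: ltry.
by rewrite /Z fineK // ge0_fin_numE.
Qed.

Let Z_gt0 : 0 < Z.
Proof. by rewrite -lte_fin -ZiE lt0e Zi_neq0 Zi_ge0. Qed.

Let Z_le1 : Z <= 1.
Proof. by rewrite -lee_fin -ZiE. Qed.

Lemma core_mq : measurable_fun F q.
Proof.
apply: (@eq_measurable_fun _ _ _ _ F (fun f => p f * expR (- gam f) * Z^-1)).
  by move=> f /set_mem Ff; rewrite hq.
by apply: measurable_funM => //; exact: measurable_cst.
Qed.

Lemma core_q0 f : F f -> 0 <= q f.
Proof. by move=> Ff; rewrite hq // divr_ge0 ?pe0 // ltW. Qed.

Lemma core_iq : (\int[mu]_(f in F) (q f)%:E = 1)%E.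
Proof.
transitivity (\int[mu]_(f in F) ((Z^-1)%:E * (p f * expR (- gam f))%:E))%E.
  by apply: eq_integral => f /set_mem Ff; rewrite hq // -EFinM mulrC.
rewrite ge0_integralZl_EFin //.
- by rewrite -/Zi ZiE -EFinM mulVf // gt_eqF.
- exact/measurable_EFinP.
- by rewrite invr_ge0 ltW.
Qed.

Let a := - ln Z.
Let a0 : 0 <= a.
Proof. by rewrite /a oppr_ge0 ln_le0. Qed.

Let qE f : F f -> q f = p f * expR (- (gam f - a)).
Proof.
move=> Ff; rewrite hq // (_ : - (gam f - a) = - gam f + - ln Z); last first.
  by rewrite /a; ring.
by rewrite expRD (expRN (ln Z)) lnK ?posrE // mulrA.
Qed.

Let key f : F f -> q f * gam f + a * p f <= p f * gam f + a * q f.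
Proof.
move=> Ff; rewrite qE //.
set U := gam f - a; set E := expR (- U); set P := p f.
have gE : gam f = U + a by rewrite /U subrK.
rewrite gE.
have H : 0 <= P * ((1 - E) * U).
  apply: mulr_ge0; first exact: p0.
  have [U0|U0] := leP 0 U.
    by apply: mulr_ge0 => //; rewrite subr_ge0 /E expR_le1 oppr_le0.
  apply: mulr_le0 => //; last exact: ltW.
  by rewrite subr_le0 /E -[leLHS]expR0 ler_expR oppr_ge0 ltW.
nra.
Qed.

Let mA1 : measurable_fun F (fun f => (p f * gam f)%:E).
Proof. by apply/measurable_EFinP; exact: measurable_funM. Qed.
Let mA2 : measurable_fun F (fun f => (q f * gam f)%:E).
Proof. by apply/measurable_EFinP; apply: measurable_funM => //; exact: core_mq. Qed.

Let int1 : (\int[mu]_(f in F) (p f * gam f + a * q f)%:E =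
  \int[mu]_(f in F) (p f * gam f)%:E + a%:E)%E.
Proof.
transitivity (\int[mu]_(f in F) ((p f * gam f)%:E + a%:E * (q f)%:E))%E.
  by apply: eq_integral => f _; rewrite EFinD -EFinM.
rewrite ge0_integralD //.
- by rewrite ge0_integralZl_EFin // ?core_iq ?mule1 //; [exact: core_q0|exact/measurable_EFinP/core_mq].
- by move=> f Ff; rewrite lee_fin mulr_ge0 ?p0 ?gam0.
- by move=> f Ff; rewrite -EFinM lee_fin mulr_ge0 ?core_q0.
- by apply/measurable_funeM/measurable_EFinP/core_mq.
Qed.

Let int2 : (\int[mu]_(f in F) (q f * gam f + a * p f)%:E =
  \int[mu]_(f in F) (q f * gam f)%:E + a%:E)%E.
Proof.
transitivity (\int[mu]_(f in F) ((q f * gam f)%:E + a%:E * (p f)%:E))%E.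
  by apply: eq_integral => f _; rewrite EFinD -EFinM.
rewrite ge0_integralD //.
- by rewrite ge0_integralZl_EFin // ?ip ?mule1 //; exact/measurable_EFinP.
- by move=> f Ff; rewrite lee_fin mulr_ge0 ?core_q0 ?gam0.
- by move=> f Ff; rewrite -EFinM lee_fin mulr_ge0 ?p0.
- by apply/measurable_funeM/measurable_EFinP.
Qed.

Let le12 : (\int[mu]_(f in F) (q f * gam f + a * p f)%:E <=
  \int[mu]_(f in F) (p f * gam f + a * q f)%:E)%E.
Proof.
apply: ge0_le_integral => //.
- by move=> f Ff; rewrite lee_fin addr_ge0 ?mulr_ge0 ?core_q0 ?gam0 ?p0.
- apply/measurable_EFinP; apply: measurable_funD.
    by apply: measurable_funM => //; exact: core_mq.
  by apply: measurable_funM => //; exact: measurable_cst.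
- apply/measurable_EFinP; apply: measurable_funD.
    exact: measurable_funM.
  by apply: measurable_funM; [exact: measurable_cst|exact: core_mq].
Qed.

Lemma core_le : (\int[mu]_(f in F) (q f * gam f)%:E <=
  \int[mu]_(f in F) (p f * gam f)%:E)%E.
Proof. by rewrite -(@leeD2rE _ a%:E) // -int1 -int2. Qed.

Lemma core_lt : (\int[mu]_(f in F) (p f * gam f)%:E < +oo)%E ->
  ~ {ae mu, forall f, F f -> q f = p f} ->
  (\int[mu]_(f in F) (q f * gam f)%:E < \int[mu]_(f in F) (p f * gam f)%:E)%E.
Proof.
move=> fin nae; rewrite lt_neqAle core_le andbT; apply/negP => /eqP E.
pose A1 f := p f * gam f + a * q f.
pose A2 f := q f * gam f + a * p f.
have A10 f : F f -> 0 <= A1 f by move=> Ff; rewrite addr_ge0 ?mulr_ge0 ?core_q0 ?gam0 ?p0.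
have A20 f : F f -> 0 <= A2 f by move=> Ff; rewrite addr_ge0 ?mulr_ge0 ?core_q0 ?gam0 ?p0.
have mA1' : measurable_fun F A1.
  apply: measurable_funD; first exact: measurable_funM.
  by apply: measurable_funM; [exact: measurable_cst|exact: core_mq].
have mA2' : measurable_fun F A2.
  apply: measurable_funD; first by apply: measurable_funM => //; exact: core_mq.
  by apply: measurable_funM => //; exact: measurable_cst.
have pgfin : (\int[mu]_(f in F) (p f * gam f)%:E)%E \is a fin_num.
  rewrite ge0_fin_numE // integral_ge0 // => f Ff.
  by rewrite lee_fin mulr_ge0 ?p0 ?gam0.
have iA1 : mu.-integrable F (EFin \o A1).
  apply/integrableP; split; first exact/measurable_EFinP.
  rewrite (eq_integral (fun f => (A1 f)%:E)); last first.
    by move=> f /set_mem Ff; rewrite /= ger0_norm // A10.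
  by rewrite int1 -(fineK pgfin) -EFinD ltry.
have iA2 : mu.-integrable F (EFin \o A2).
  apply/integrableP; split; first exact/measurable_EFinP.
  rewrite (eq_integral (fun f => (A2 f)%:E)); last first.
    by move=> f /set_mem Ff; rewrite /= ger0_norm // A20.
  by rewrite int2 E -(fineK pgfin) -EFinD ltry.
have h0 : (\int[mu]_(f in F) (A1 f - A2 f)%:E = 0)%E.
  rewrite (eq_integral (fun f => ((A1 f)%:E - (A2 f)%:E)%E)) //.
  rewrite integralB_EFin // int1 int2 E subee // fin_numD pgfin //.
have hae : ae_eq mu F (fun f => (A1 f - A2 f)%:E) (cst 0%E).
  apply/ae_eq_integral_abs => //.
    by apply/measurable_EFinP; exact: measurable_funB.
  rewrite -h0; apply: eq_integral => f /set_mem Ff.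
  by rewrite gee0_abs // lee_fin subr_ge0 key.
apply: nae; apply: filterS hae => f h Ff.
have := h Ff => /= /eqP; rewrite eqe.
rewrite /A1 /A2 qE //.
set U := gam f - a; set Ee := expR (- U); set P := p f.
have gE : gam f = U + a by rewrite /U subrK.
rewrite gE (_ : _ - _ = P * ((1 - Ee) * U)); last by ring.
rewrite mulf_eq0 => /orP[/eqP P0|]; first by rewrite P0 mul0r.
rewrite mulf_eq0 => /orP[|/eqP U0].
  by rewrite subr_eq0 => /eqP <-; rewrite mulr1.
by rewrite /Ee U0 oppr0 expR0 mulr1.
Qed.

End Core.

Lemma pair_decomp (R : realType) (n : nat) (C : 'I_n.+1 -> 'I_n.+1 -> \bar R)
  (k : 'I_n.+1) : (forall a b, C a b = C b a) ->
  (\sum_(a < n.+1) \sum_(b < n.+1 | (a < b)%N) C a b =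
   \sum_(a < n.+1) \sum_(b < n.+1 | (a < b)%N && (a != k) && (b != k)) C a b
   + \sum_(j < n.+1 | j != k) C k j)%E.
Proof.
move=> Csym.
have E1 (a : 'I_n.+1) : (\sum_(b < n.+1 | (a < b)%N) C a b =
   \sum_(b < n.+1 | (a < b)%N && (a != k) && (b != k)) C a b +
   \sum_(b < n.+1 | (a < b)%N && ((a == k) || (b == k))) C a b)%E.
  rewrite (bigID (fun b => (a != k) && (b != k))) /=.
  congr (_ + _)%E; apply: eq_bigl => b.
    by rewrite andbA.
  by rewrite negb_and !negbK.
rewrite (eq_bigr _ (fun a _ => E1 a)) big_split /=; congr (_ + _)%E.
rewrite (bigD1 k) //= eqxx.
rewrite [X in (_ + X)%E](eq_bigr (fun a : 'I_n.+1 => if (a < k)%N then C a k else 0%E)); last first.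
  move=> a /negbTE ak.
  rewrite ak /= (eq_bigl (fun b => (b == k) && (a < k)%N)); last first.
    by move=> b; case: eqP => [->|]; rewrite ?andbT ?andbF.
  by rewrite big_mkcondr big_pred1_eq.
rewrite -big_mkcondr /=.
rewrite [RHS](bigID (fun j : 'I_n.+1 => (j < k)%N)) /= addeC.
congr (_ + _)%E.
  by apply: eq_bigr => b _; rewrite Csym.
apply: eq_bigl => b; rewrite andbT.
by rewrite -val_eqE /=; case: ltngtP.
Qed.

Section Main.
Context (dT : measure_display) (T : measurableType dT) (R : realType)
  (mu : {sigma_finite_measure set T -> \bar R}) (F : set T) (psi : T -> T -> R)
  (n : nat) (pk pk1 : 'I_n.+1 -> T -> R).
Hypothesis mF : measurable F.
Hypothesis mpsi : measurable_fun (F `*` F) (fun x : T * T => psi x.1 x.2).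
Hypothesis psi0 : forall f g, F f -> F g -> 0 <= psi f g.
Hypothesis psisym : forall f g, F f -> F g -> psi f g = psi g f.
Hypothesis hpk : forall i, is_density mu F (pk i).
Hypothesis hfin : forall i f, F f -> gammabar mu F psi pk pk1 i f \is a fin_num.
Hypothesis hup : update_rule mu F psi pk pk1.

Local Notation GG := (@G _ _ _ mu F psi).
Local Notation NN := (@nnm _ _ _ F).

Definition P (s : nat) (j : 'I_n.+1) : T -> R :=
  if (j < s)%N then pk1 j else pk j.

Lemma gbE (i : 'I_n.+1) f : gammabar mu F psi pk pk1 i f =
  (\sum_(j < n.+1 | j != i) GG (P i j) f)%E.
Proof.
rewrite /gammabar [RHS](bigID (fun j : 'I_n.+1 => (j < i)%N)) /=.
congr (_ + _)%E; apply: eq_big => j.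
- by rewrite -val_eqE /=; case: ltngtP.
- by move=> ji; rewrite /P ji.
- by rewrite -val_eqE /=; case: ltngtP.
- by move=> ij; rewrite /P ltnNge (ltnW ij).
Qed.

Let gm (i : 'I_n.+1) f := fine (gammabar mu F psi pk pk1 i f).

Lemma dens_step (i : 'I_n.+1) :
  (forall j : 'I_n.+1, (j < i)%N -> is_density mu F (pk1 j)) ->
  is_density mu F (pk1 i).
Proof.
move=> hj.
have hP : forall j, NN (P i j).
  move=> j; rewrite /P; case: ifPn => ji.
    by have [? ? _] := hj j ji; split.
  by have [? ? _] := hpk j; split.
have mgb : measurable_fun F (fun f => gammabar mu F psi pk pk1 i f).
  apply: (@eq_measurable_fun _ _ _ _ F (fun f =>
    \sum_(j <- [seq j <- index_enum 'I_n.+1 | j != i]) GG (P i j) f)%E).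
    by move=> f _; rewrite gbE big_filter.
  apply: emeasurable_sum => j; exact: mG.
have mgm : measurable_fun F (gm i).
  exact: (measurableT_comp (fine_measurable measurableT) mgb).
have gm0 f : F f -> 0 <= gm i f.
  move=> Ff; rewrite /gm fine_ge0 // gbE sume_ge0 // => j _; exact: G0.
have [mp p0 ip] := hpk i.
have hq : forall f, F f -> pk1 i f = pk i f * expR (- gm i f) /
   fine (\int[mu]_(g in F) (pk i g * expR (- gm i g))%:E)%E.
  by move=> f Ff; rewrite (hup i f Ff).
split.
- exact: (@core_mq _ _ _ mu F (pk i) (gm i) (pk1 i) mp mgm hq).
- move=> f Ff; exact: (@core_q0 _ _ _ mu F mF (pk i) (gm i) (pk1 i) mp p0 ip mgm gm0 hq f Ff).
- exact: (@core_iq _ _ _ mu F mF (pk i) (gm i) (pk1 i) mp p0 ip mgm gm0 hq).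
Qed.

Lemma dens (i : 'I_n.+1) : is_density mu F (pk1 i).
Proof.
suff H : forall m (i : 'I_n.+1), (i <= m)%N -> is_density mu F (pk1 i).
  exact: (H _ i (leqnn _)).
elim=> [|m IH] j.
  rewrite leqn0 => /eqP j0; apply: dens_step => k; by rewrite j0.
move=> jm; apply: dens_step => k kj; apply: IH.
by rewrite -ltnS (leq_trans kj jm).
Qed.

Lemma nnmP s j : NN (P s j).
Proof.
rewrite /P; case: ifPn => _.
  by have [? ? _] := dens j; split.
by have [? ? _] := hpk j; split.
Qed.

Lemma nnm_pk j : NN (pk j).
Proof. by have [? ? _] := hpk j; split. Qed.

Lemma nnm_pk1 j : NN (pk1 j).
Proof. by have [? ? _] := dens j; split. Qed.

Let S (k : 'I_n.+1) (x : T -> R) :=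
  (\sum_(j < n.+1 | j != k) coll mu F psi x (P k j))%E.

Lemma SE (k : 'I_n.+1) x : NN x ->
  S k x = (\int[mu]_(f in F) (x f * gm k f)%:E)%E.
Proof.
move=> hx; rewrite /S -(@int_sum_coll _ _ _ mu F psi mF mpsi psi0 n (P k) k x hx (fun j => nnmP k j)).
apply: eq_integral => f /set_mem Ff.
by rewrite /gm EFinM fineK ?hfin // gbE.
Qed.

Let Rest (Q : 'I_n.+1 -> T -> R) (k : 'I_n.+1) :=
  (\sum_(a < n.+1) \sum_(b < n.+1 | (a < b)%N && (a != k) && (b != k))
     coll mu F psi (Q a) (Q b))%E.

Lemma JcE (Q : 'I_n.+1 -> T -> R) k : (forall j, NN (Q j)) ->
  Jc mu F psi Q = (Rest Q k + \sum_(j < n.+1 | j != k) coll mu F psi (Q k) (Q j))%E.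
Proof.
move=> hQ; rewrite /Jc (@pair_decomp _ n (fun a b => coll mu F psi (Q a) (Q b)) k) //.
by move=> a b; apply: coll_sym.
Qed.

Lemma Rest0 Q k : (forall j, NN (Q j)) -> (0 <= Rest Q k)%E.
Proof.
move=> hQ; apply: sume_ge0 => a _; apply: sume_ge0 => b _; exact: coll0.
Qed.

Lemma PSE (k : 'I_n.+1) (a : 'I_n.+1) : a != k -> P k.+1 a = P k a.
Proof. by move=> ak; rewrite /P ltnS leq_eqVlt val_eqE (negbTE ak). Qed.

Lemma stepE (k : 'I_n.+1) :
  Jc mu F psi (P k.+1) = (Rest (P k) k + S k (pk1 k))%E /\
  Jc mu F psi (P k) = (Rest (P k) k + S k (pk k))%E.
Proof.
split.
  rewrite (JcE (P k.+1) k (nnmP k.+1)); congr (_ + _)%E.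
    apply: eq_bigr => a _; apply: eq_bigr => b /andP[/andP[_ ak] bk].
    by rewrite !PSE.
  apply: eq_bigr => j jk; by rewrite (PSE k j jk) {1}/P ltnSn.
rewrite (JcE (P k) k (nnmP k)); congr (_ + _)%E.
by apply: eq_bigr => j jk; rewrite /P ltnn.
Qed.

Let gm0 (k : 'I_n.+1) f : F f -> 0 <= gm k f.
Proof.
move=> Ff; rewrite /gm fine_ge0 // gbE sume_ge0 // => j _; by apply: G0 => //; exact: nnmP.
Qed.

Let mgm (k : 'I_n.+1) : measurable_fun F (gm k).
Proof.
have mgb : measurable_fun F (fun f => gammabar mu F psi pk pk1 k f).
  apply: (@eq_measurable_fun _ _ _ _ F (fun f =>
    \sum_(j <- [seq j <- index_enum 'I_n.+1 | j != k]) GG (P k j) f)%E).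
    by move=> f _; rewrite gbE big_filter.
  apply: emeasurable_sum => j; by apply: mG => //; exact: nnmP.
exact: (measurableT_comp (fine_measurable measurableT) mgb).
Qed.

Let hq (k : 'I_n.+1) : forall f, F f -> pk1 k f = pk k f * expR (- gm k f) /
   fine (\int[mu]_(g in F) (pk k g * expR (- gm k g))%:E)%E.
Proof. by move=> f Ff; rewrite (hup k f Ff). Qed.

Lemma Jc_le (k : 'I_n.+1) :
  (Jc mu F psi (P k.+1) <= Jc mu F psi (P k))%E.
Proof.
have [-> ->] := stepE k; apply: leeD2l.
rewrite (SE k (pk1 k) (nnm_pk1 k)) (SE k (pk k) (nnm_pk k)).
have [mp p0 ip] := hpk k.
exact: (@core_le _ _ _ mu F mF (pk k) (gm k) (pk1 k) mp p0 ip (mgm k) (gm0 k) (hq k)).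
Qed.

Lemma Jc_lt (k : 'I_n.+1) : (Jc mu F psi (P k) < +oo)%E ->
  ~ {ae mu, forall f, F f -> pk1 k f = pk k f} ->
  (Jc mu F psi (P k.+1) < Jc mu F psi (P k))%E.
Proof.
move=> fin nae; have [E1 E2] := stepE k; rewrite E1 E2.
rewrite E2 in fin.
have R0 := Rest0 (P k) k (nnmP k).
have S0 : (0 <= S k (pk k))%E.
  by apply: sume_ge0 => j _; apply: coll0 => //; [exact: nnm_pk|exact: nnmP].
have Rfin : Rest (P k) k \is a fin_num.
  rewrite ge0_fin_numE //; apply: le_lt_trans fin; exact: leeDl.
have Sfin : (S k (pk k) < +oo)%E.
  apply: le_lt_trans fin; exact: leeDr.
rewrite lteD2lE //.
rewrite (SE k (pk k) (nnm_pk k)) in Sfin.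
rewrite (SE k (pk1 k) (nnm_pk1 k)) (SE k (pk k) (nnm_pk k)).
have [mp p0 ip] := hpk k.
exact: (@core_lt _ _ _ mu F mF (pk k) (gm k) (pk1 k) mp p0 ip (mgm k) (gm0 k) (hq k)).
Qed.

Lemma mono s t : (s <= t)%N -> (t <= n.+1)%N ->
  (Jc mu F psi (P t) <= Jc mu F psi (P s))%E.
Proof.
elim: t => [|t IH] st tn.
  by move: st; rewrite leqn0 => /eqP ->.
move: st; rewrite leq_eqVlt => /orP[/eqP -> //|st].
apply: le_trans (IH st (ltnW tn)).
exact: (Jc_le (Ordinal tn)).
Qed.

Lemma Jc0 (Q : 'I_n.+1 -> T -> R) : (forall j, NN (Q j)) -> (0 <= Jc mu F psi Q)%E.
Proof.
move=> hQ; apply: sume_ge0 => a _; apply: sume_ge0 => b _; exact: coll0.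
Qed.

Lemma main : (exists i : 'I_n.+1, ~ {ae mu, forall f, F f -> pk1 i f = pk i f}) ->
  exists xi : R, 0 < xi /\
    (Jc mu F psi pk1 <= Jc mu F psi pk - xi%:E)%E.
Proof.
move=> [i0 nae].
have P0 : P 0 = pk by apply: funext => j; rewrite /P ltn0.
have Pn : P n.+1 = pk1 by apply: funext => j; rewrite /P ltn_ord.
have J0 := Jc0 _ nnm_pk; have J10 := Jc0 _ nnm_pk1.
have [fin|] := ltP (Jc mu F psi pk) +oo%E; last first.
  rewrite leye_eq => /eqP ->; exists 1; split => //; exact: leey.
have h1 : (Jc mu F psi (P i0) <= Jc mu F psi pk)%E.
  have -> : Jc mu F psi pk = Jc mu F psi (P 0) by rewrite P0.
  by apply: mono => //; exact: ltnW.
have h2 := Jc_lt i0 (le_lt_trans h1 fin) nae.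
have h3 : (Jc mu F psi pk1 <= Jc mu F psi (P i0.+1))%E.
  have -> : Jc mu F psi pk1 = Jc mu F psi (P n.+1) by rewrite Pn.
  by apply: mono.
have lt : (Jc mu F psi pk1 < Jc mu F psi pk)%E.
  exact: le_lt_trans h3 (lt_le_trans h2 h1).
have f0 : Jc mu F psi pk \is a fin_num by rewrite ge0_fin_numE.
have f1 : Jc mu F psi pk1 \is a fin_num.
  by rewrite ge0_fin_numE // (lt_trans lt fin).
move: (fineK f0) (fineK f1) lt.
set a := fine (Jc mu F psi pk); set b := fine (Jc mu F psi pk1) => Ea Eb.
rewrite -Ea -Eb lte_fin => ab.
exists (a - b); split; first by rewrite subr_gt0.
by rewrite -EFinB lee_fin; lra.
Qed.

End Main.

Theorem theorem2 (dT : measure_display) (T : measurableType dT) (R : realType)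
  (mu : {sigma_finite_measure set T -> \bar R}) (F : set T) (psi : T -> T -> R)
  (n : nat) (pk pk1 : 'I_n.+1 -> T -> R) :
  measurable F ->
  measurable_fun (F `*` F) (fun x : T * T => psi x.1 x.2) ->
  (forall f g, F f -> F g -> 0 <= psi f g) ->
  (forall f g, F f -> F g -> psi f g = psi g f) ->
  (forall i, is_density mu F (pk i)) ->
  (forall i f, F f -> gammabar mu F psi pk pk1 i f \is a fin_num) ->
  update_rule mu F psi pk pk1 ->
  (exists i : 'I_n.+1, ~ {ae mu, forall f, F f -> pk1 i f = pk i f}) ->
  exists xi : R, 0 < xi /\
    (Jc mu F psi pk1 <= Jc mu F psi pk - xi%:E)%E.
Proof.
move=> *; by apply: main.
Qed.
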